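(* (a) Let $q_{4,1}(1)<q_{4,1}(2)<\cdots$ be the increasing enumeration of all primes congruent to $1$ modulo $4$ (so $q_{4,1}(1)=5$, $q_{4,1}(2)=13,\dots$) and $S_{4,1}(n)=q_{4,1}(1)+\dots+q_{4,1}(n)$. Then $S_{4,1}(n)-q_{4,1}(n+1)\ge 244$ for every $n\ge 10$. (b) Let $q_{4,3}(1)<q_{4,3}(2)<\cdots$ be the increasing enumeration of all primes congruent to $3$ modulo $4$ (so $q_{4,3}(1)=3$, $q_{4,3}(2)=7,\dots$) and $S_{4,3}(n)=q_{4,3}(1)+\dots+q_{4,3}(n)$. Then $S_{4,3}(n)-q_{4,3}(n+1)\ge 112$ for every $n\ge 8$. *)

(* Defs.v *)
From mathcomp Require Import all_boot.

(* [is_enum_primes_mod4 r q]: q 1 < q 2 < ... is the increasing enumeration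
   (1-indexed) of all primes congruent to r modulo 4. The value q 0 is
   irrelevant. *)
Definition is_enum_primes_mod4 (r : nat) (q : nat -> nat) : Prop :=
  (forall k, 0 < k -> q k < q k.+1) /\
  (forall k, 0 < k -> prime (q k) /\ q k %% 4 = r) /\
  (forall p, prime p -> p %% 4 = r -> exists2 k, 0 < k & q k = p).

Definition Ssum (q : nat -> nat) (n : nat) : nat := \sum_(1 <= i < n.+1) q i.

(* Main.v *)
Require Import Defs.
From Stdlib Require Import Lia NArith.
From mathcomp Require Import all_boot all_algebra.
From mathcomp Require Import zify.
Set Implicit Arguments. Unset Strict Implicit. Unset Printing Implicit Defensive.

Lemma dvdn_logn n m : 0 < n -> 0 < m ->
  (forall p, prime p -> logn p n <= logn p m) -> n %| m.
Proof.
move=> n0 m0 H; apply/dvdn_partP => // p; rewrite mem_primes => /andP[pp _].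
by rewrite p_part pfactor_dvdn // H.
Qed.

Lemma prod_primes_gt0 a b : 0 < \prod_(a <= p < b | prime p) p.
Proof. by apply: prodn_cond_gt0 => p /prime_gt0. Qed.

Lemma logn_prod_primes q a b : prime q ->
  logn q (\prod_(a <= p < b | prime p) p) = (a <= q < b).
Proof.
move=> pq; elim: b => [|b IH]; first by rewrite big_geq // logn1 ltn0 andbF.
case: (leqP a b) => ab; last first.
  rewrite big_geq // logn1; lia.
rewrite big_mkcond big_nat_recr //= -big_mkcond /=; case: ifP => pb.
  rewrite (lognM _ (prod_primes_gt0 _ _) (prime_gt0 pb)) IH logn_prime //.
  case: (eqVneq q b) => [->|qb] /=; first by rewrite ab ltnSn ltnn andbF.
  rewrite addn0; move/eqP: qb; lia.
rewrite muln1 IH; case: (eqVneq q b) => [qb|/eqP]; first by rewrite qb pb in pq.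
lia.
Qed.

Lemma bin_le_exp2 n k : 'C(n, k) <= 2 ^ n.
Proof.
elim: n k => [|n IH] [|k]; rewrite ?bin0 ?bin0n ?expn_gt0 //.
by rewrite binS expnS mul2n -addnn leq_add.
Qed.

Lemma bin_mid_le k : 'C(k.*2.+1, k) <= 4 ^ k.
Proof.
have H := expnDn 1 1 (k.*2.+1).
have E : \sum_(i < (k.*2.+1).+1) 'C(k.*2.+1, i) * (1 ^ (k.*2.+1 - i) * 1 ^ i)
   = \sum_(0 <= i < (k.*2.+1).+1) 'C(k.*2.+1, i).
{ rewrite big_mkord; apply: eq_bigr => i _; by rewrite !exp1n !muln1. }
rewrite E in H.
have S2 : 'C(k.*2.+1, k) + 'C(k.*2.+1, k.+1) <= \sum_(0 <= i < (k.*2.+1).+1) 'C(k.*2.+1, i).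
{ rewrite (@big_cat_nat _ _ _ k) //=; last by clear E H; lia.
  rewrite (@big_ltn _ _ _ k); last by clear E H; lia. rewrite (@big_ltn _ _ _ k.+1); last by clear E H; lia. lia. }
have Csym : 'C(k.*2.+1, k.+1) = 'C(k.*2.+1, k).
{ rewrite -bin_sub; last by clear E H; lia. congr 'C(_, _); lia. }
rewrite Csym addnn -H in S2.
rewrite -(leq_pmul2l (isT : 0 < 2)) mul2n; apply: (leq_trans S2).
by rewrite -mul2n expnS expnM mul2n.
Qed.

Lemma prime_ndvd_fact q n : prime q -> n < q -> ~~ (q %| n`!).
Proof.
move=> pq; elim: n => [|n IH] lt; first by rewrite fact0 dvdn1; apply/eqP => q1; rewrite q1 in pq.
rewrite factS Euclid_dvdM // negb_or IH ?andbT; last lia.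
apply/negP => /dvdn_leq; lia.
Qed.

Definition primorial m := \prod_(0 <= p < m.+1 | prime p) p.

Lemma mid_primes_dvd k :
  \prod_(k.+2 <= p < k.*2.+2 | prime p) p %| 'C(k.*2.+1, k).
Proof.
apply: dvdn_logn; [exact: prod_primes_gt0 | rewrite bin_gt0 -addnn; lia | move=> q pq].
rewrite logn_prod_primes //.
case: (boolP (k.+2 <= q < k.*2.+2)) => [/andP[h1 h2]|] //.
rewrite logn_gt0 mem_primes pq bin_gt0 /=.
have kk : k <= k.*2.+1 by rewrite -addnn; lia.
rewrite kk /=.
have F := bin_fact kk.
have E : k.*2.+1 - k = k.+1 by rewrite -addnn; lia.
rewrite E in F.
have qd : q %| (k.*2.+1)`! by apply: dvdn_fact; rewrite prime_gt0 //=; lia.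
rewrite -F Euclid_dvdM // Euclid_dvdM // in qd.
case/orP: qd => [//|/orP[]].
  by move=> H; move: (prime_ndvd_fact pq (ltnW h1)); rewrite H.
by move=> H; move: (prime_ndvd_fact pq h1); rewrite H.
Qed.

Lemma primorial_le m : primorial m <= 4 ^ m.
Proof.
elim/ltn_ind: m => m IH.
case: (ltnP m 3) => m3.
  case: m m3 IH => [|[|[|]]] // _ _; by rewrite /primorial unlock.
case: (boolP (odd m)) => om.
  have [k mk] : exists k, m = k.*2.+1.
    exists m./2; by rewrite -[in LHS](odd_double_half m) om.
  rewrite /primorial mk (@big_cat_nat _ _ _ k.+2) //=; last by rewrite -addnn; lia.
  have H1 := IH k.+1 ltac:(rewrite mk -addnn; lia).
  have Cpos : 0 < 'C(k.*2.+1, k) by rewrite bin_gt0 -addnn; lia.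
  have H2 := dvdn_leq Cpos (mid_primes_dvd k).
  apply: leq_trans (leq_mul H1 (leq_trans H2 (bin_mid_le k))) _.
  by rewrite -expnD -addnn addSn.
have pm : ~~ prime m.
  apply/negP => /even_prime [m2|]; first by rewrite m2 in m3.
  by rewrite (negPf om).
case: m m3 IH om pm => [//|m] m3 IH om pm.
rewrite /primorial big_mkcond big_nat_recr //= -big_mkcond /= (negPf pm) muln1.
apply: leq_trans (IH m (ltnSn m)) _.
by rewrite leq_exp2l.
Qed.


Lemma cnt_mod4 M b : 0 < b < 4 ->
  \sum_(0 <= m < M.+1 | m %% 4 == b) 1 = (M + 4 - b) %/ 4.
Proof.
move=> hb; elim: M => [|M IH].
  rewrite big_mkcond big_nat1 mod0n; case: (eqVneq 0 b) => [e|_]; lia.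
rewrite big_mkcond big_nat_recr //= -big_mkcond /= IH.
case: ifP => /eqP h; lia.
Qed.

Lemma cnt_dvd N a d : 0 < d ->
  \sum_(0 <= k < N.+1 | k %% 4 == a) (d %| k) =
  \sum_(0 <= m < (N %/ d).+1 | (d * m) %% 4 == a) 1.
Proof.
move=> d0; elim: N => [|N IH].
  by rewrite div0n big_mkcond big_nat1 [in RHS]big_mkcond big_nat1 muln0 dvdn0.
rewrite big_mkcond big_nat_recr //= -big_mkcond /= IH divnS //.
case: (boolP (d %| N.+1)) => dN /=; last first.
  by case: ifP; rewrite ?addn0 // add0n.
rewrite add1n [in RHS]big_mkcond [in RHS]big_nat_recr //= -big_mkcond /=.
have -> : d * (N %/ d).+1 = N.+1.
  have := divnK dN; rewrite divnS // dN add1n mulnC => ->; done.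
by case: ifP.
Qed.

Lemma resid d m a : odd d -> (a == 1) || (a == 3) ->
  ((d * m) %% 4 == a) = (m %% 4 == (a * d) %% 4).
Proof.
move=> od ha.
rewrite -modnMm -(modnMmr a d).
have h2 : d %% 2 = 1 by rewrite modn2 od.
have hd : d %% 4 = 1 \/ d %% 4 = 3 by lia.
move: (m %% 4) (ltn_pmod m (isT : 0 < 4)) => v hv.
case/orP: ha => /eqP ->; case: hd => ->; case: v hv => [|[|[|[|v]]]] //.
Qed.

Definition cntr a b r d := \sum_(a <= k < b | k %% 4 == r) (d %| k).

Lemma C0_closed N a d : odd d -> (a == 1) || (a == 3) ->
  cntr 0 N.+1 a d = (N %/ d + 4 - (a * d) %% 4) %/ 4.
Proof.
move=> od ha; rewrite /cntr cnt_dvd; last by case: d od.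
rewrite (eq_bigl (fun m => m %% 4 == (a * d) %% 4)) => [|m]; last by rewrite resid.
apply: cnt_mod4.
have : (a * d) %% 2 = 1 by rewrite modn2 oddM od andbT; case/orP: ha => /eqP ->.
lia.
Qed.

Lemma key_count r y d : (r == 1) || (r == 3) -> 0 < d ->
  cntr y.+1 (2 * y).+1 r d <=
  cntr 0 y.+1 (4 - r) d + ((d %% 4 == r) && (((2 * y) %/ d) %% 4 == 1)).
Proof.
move=> hr d0.
case: (boolP (odd d)) => od; last first.
  suff -> : cntr y.+1 (2 * y).+1 r d = 0 by [].
  rewrite /cntr big1 // => k /eqP kr; apply/eqP; rewrite eqb0; apply/negP => dk.
  have : 2 %| k by apply: dvdn_trans dk; rewrite dvdn2.
  move: hr; rewrite -kr => /orP[] /eqP; lia.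
have Hs : cntr 0 (2 * y).+1 r d = cntr 0 y.+1 r d + cntr y.+1 (2 * y).+1 r d.
  by rewrite /cntr (@big_cat_nat _ _ _ y.+1) //; lia.
have hr' : (4 - r == 1) || (4 - r == 3) by case/orP: hr => /eqP ->.
move: Hs; rewrite !C0_closed //.
have EL : y %/ d = (2 * y) %/ d %/ 2 by rewrite -divnMA [d * 2]mulnC divnMl.
rewrite EL; move: ((2 * y) %/ d) => M.
have h2 : d %% 2 = 1 by rewrite modn2 od.
have hd : d %% 4 = 1 \/ d %% 4 = 3 by lia.
case/orP: hr => /eqP ->; case: hd => hd; rewrite hd /=;
  case: (M %% 4 == 1) / eqP => /= hM; lia.
Qed.

Lemma logn_prodk p a b (P : pred nat) : (forall k, P k -> 0 < k) ->
  logn p (\prod_(a <= k < b | P k) k) = \sum_(a <= k < b | P k) logn p k.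
Proof.
move=> Hp.
have H : (0 < \prod_(a <= k < b | P k) k) /\
   logn p (\prod_(a <= k < b | P k) k) = \sum_(a <= k < b | P k) logn p k.
  apply: (big_rec2 (fun x y => 0 < x /\ logn p x = y)); first by rewrite logn1.
  move=> i y1 y2 Pi [h1 h2]; split; first by rewrite muln_gt0 Hp.
  by rewrite lognM ?(Hp i Pi) // h2.
by case: H.
Qed.

Lemma logn_count_ext p k E : prime p -> 0 < k -> k <= E ->
  logn p k = \sum_(1 <= e < E) (p ^ e %| k).
Proof.
move=> pp k0 kE; rewrite logn_count_dvd // (@big_cat_nat _ _ _ k 1 E) //=.
rewrite [X in _ = _ + X]big1_seq ?addn0 // => e /andP[_].
rewrite mem_index_iota => /andP[ke _]; apply/eqP; rewrite eqb0; apply/negP => /(dvdn_leq k0).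
have := ltn_expl e (prime_gt1 pp); lia.
Qed.

Lemma logn_prod_pow q E (f : nat -> nat) : prime q ->
  logn q (\prod_(0 <= p < E | prime p) p ^ f p) = (q < E) * f q.
Proof.
move=> pq; elim: E => [|E IH]; first by rewrite big_geq // logn1.
rewrite big_mkcond big_nat_recr //= -big_mkcond /=.
have pos : 0 < \prod_(0 <= p < E | prime p) p ^ f p.
  by apply: prodn_cond_gt0 => p /prime_gt0 h; rewrite expn_gt0 h.
case: ifP => pE.
  have pE0 : 0 < E ^ f E by rewrite expn_gt0 prime_gt0.
  rewrite (lognM _ pos pE0) IH lognX logn_prime //.
  case: (eqVneq q E) => [->|qE]; first by rewrite ltnn ltnSn mul0n add0n muln1 mul1n.
  rewrite muln0 addn0; move/eqP: qE => qE.
  case: (ltnP q E) => h; case: (ltnP q E.+1) => h'; rewrite ?mul1n ?mul0n; lia.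
rewrite muln1 IH; case: (eqVneq q E) => [qE|/eqP qE]; first by rewrite qE pE in pq.
case: (ltnP q E) => h; case: (ltnP q E.+1) => h'; rewrite ?mul1n ?mul0n; lia.
Qed.

Definition Num r y := \prod_(y.+1 <= k < (2 * y).+1 | k %% 4 == r) k.
Definition Den r y := \prod_(0 <= k < y.+1 | k %% 4 == 4 - r) k.
Definition ind r y d := (d %% 4 == r) && (((2 * y) %/ d) %% 4 == 1).
Definition beta r y p := \sum_(1 <= e < (2 * y).+1) ind r y (p ^ e).
Definition Bigb r y := \prod_(0 <= p < (2 * y).+1 | prime p) p ^ beta r y p.

Lemma mod4_pos k a : (a == 1) || (a == 3) -> k %% 4 == a -> 0 < k.
Proof. case: k => // /orP[] /eqP -> //. Qed.

Lemma Num_gt0 r y : (r == 1) || (r == 3) -> 0 < Num r y.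
Proof. by move=> hr; apply: prodn_cond_gt0 => k; apply: mod4_pos. Qed.

Lemma Den_gt0 r y : (r == 1) || (r == 3) -> 0 < Den r y.
Proof.
move=> hr; apply: prodn_cond_gt0 => k; apply: mod4_pos.
by case/orP: hr => /eqP ->.
Qed.

Lemma Bigb_gt0 r y : 0 < Bigb r y.
Proof. by apply: prodn_cond_gt0 => p /prime_gt0 h; rewrite expn_gt0 h. Qed.

Lemma logn_Num p r y : prime p -> (r == 1) || (r == 3) ->
  logn p (Num r y) = \sum_(1 <= e < (2 * y).+1) cntr y.+1 (2 * y).+1 r (p ^ e).
Proof.
move=> pp hr; rewrite /Num logn_prodk; last by move=> k; apply: mod4_pos.
rewrite big_nat_cond (eq_bigr (fun k => \sum_(1 <= e < (2 * y).+1) (p ^ e %| k))).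
  by rewrite -big_nat_cond /cntr exchange_big_nat.
move=> k /andP[/andP[k1 k2] kr]; apply: logn_count_ext => //; last lia.
by apply: mod4_pos kr.
Qed.

Lemma logn_Den p r y : prime p -> (r == 1) || (r == 3) ->
  logn p (Den r y) = \sum_(1 <= e < (2 * y).+1) cntr 0 y.+1 (4 - r) (p ^ e).
Proof.
move=> pp hr.
have hr' : (4 - r == 1) || (4 - r == 3) by case/orP: hr => /eqP ->.
rewrite /Den logn_prodk; last by move=> k; apply: mod4_pos.
rewrite big_nat_cond (eq_bigr (fun k => \sum_(1 <= e < (2 * y).+1) (p ^ e %| k))).
  by rewrite -big_nat_cond /cntr exchange_big_nat.
move=> k /andP[/andP[k1 k2] kr]; apply: logn_count_ext => //; last lia.
by apply: mod4_pos kr.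
Qed.

Lemma beta_big r y p : prime p -> 2 * y < p -> beta r y p = 0.
Proof.
move=> pp hp; rewrite /beta big1_seq // => e /andP[_]; rewrite mem_index_iota => /andP[e1 _].
rewrite /ind divn_small ?mod0n ?andbF //.
apply: leq_trans hp _; rewrite -{1}(expn1 p) leq_exp2l //; exact: prime_gt1.
Qed.

Lemma Num_dvd r y : (r == 1) || (r == 3) -> Num r y %| Den r y * Bigb r y.
Proof.
move=> hr; apply: dvdn_logn; rewrite ?Num_gt0 ?muln_gt0 ?Den_gt0 ?Bigb_gt0 //.
move=> p pp; rewrite lognM ?Den_gt0 ?Bigb_gt0 // logn_Num // logn_Den //.
rewrite /Bigb logn_prod_pow //.
have -> : (p < (2 * y).+1) * beta r y p = beta r y p.
  case: (ltnP p (2 * y).+1) => h; first by rewrite mul1n.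
  by rewrite beta_big.
rewrite /beta -big_split /=; apply: leq_sum => e _.
apply: key_count => //; by rewrite expn_gt0 prime_gt0.
Qed.


Lemma win4 a r : a %% 4 = 1 -> (r == 1) || (r == 3) ->
  \prod_(a <= k < a + 4 | k %% 4 == r) k = a + r - 1.
Proof.
move=> ha hr.
rewrite big_mkcond big_ltn; last lia. rewrite big_ltn; last lia.
rewrite big_ltn; last lia. rewrite big_ltn; last lia. rewrite big_geq; last lia.
have h1 : a.+1 %% 4 = 2 by lia.
have h2 : a.+2 %% 4 = 3 by lia.
have h3 : a.+3 %% 4 = 0 by lia.
rewrite ha h1 h2 h3; case/orP: hr => /eqP -> /=; lia.
Qed.

Lemma poly_ineq t r : (r == 1) || (r == 3) ->
  4 * (2 * t + 1) * (4 * t + 4 - r) * (4 * t + r) <=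
  (2 * t + 3) * (8 * t + r) * (8 * t + 4 + r).
Proof. case/orP => /eqP ->; nia. Qed.

Lemma win4' a b r : a %% 4 = 1 -> (r == 1) || (r == 3) -> b = a + 4 ->
  \prod_(a <= k < b | k %% 4 == r) k = a + r - 1.
Proof. by move=> ha hr ->; apply: win4. Qed.

Lemma Num_step r t : (r == 1) || (r == 3) ->
  Num r (4 * t.+1) * (4 * t + r) = Num r (4 * t) * ((8 * t + r) * (8 * t + 4 + r)).
Proof.
move=> hr.
have E1 : \prod_((4*t).+1 <= k < 8*t + 9 | k %% 4 == r) k = (4*t + r) * Num r (4 * t.+1).
  rewrite (@big_cat_nat _ _ _ (4*t+5)) /=; [|lia|lia].
  rewrite (@win4' _ (4*t+5)) //; [|lia|lia].
  rewrite /Num (_ : (4 * t.+1).+1 = 4*t+5); last lia.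
  rewrite (_ : (2 * (4 * t.+1)).+1 = 8*t+9); last lia.
  congr (_ * _); lia.
have E2 : \prod_((4*t).+1 <= k < 8*t + 9 | k %% 4 == r) k =
    Num r (4 * t) * ((8 * t + r) * (8 * t + 4 + r)).
  rewrite (@big_cat_nat _ _ _ (8*t+1)) /=; [|lia|lia].
  rewrite (@big_cat_nat _ _ _ (8*t+5) (8*t+1)) /=; [|lia|lia].
  rewrite (@win4' _ (8*t+5)) //; [|lia|lia].
  rewrite (@win4' _ (8*t+9)) //; [|lia|lia].
  rewrite /Num (_ : (2 * (4 * t)).+1 = 8*t+1); last lia.
  congr (_ * (_ * _)); lia.
by rewrite [LHS]mulnC -E1 E2.
Qed.

Lemma Den_step r t : (r == 1) || (r == 3) ->
  Den r (4 * t.+1) = Den r (4 * t) * (4 * t + 4 - r).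
Proof.
move=> hr.
have hr' : (4 - r == 1) || (4 - r == 3) by case/orP: hr => /eqP ->.
rewrite /Den (_ : (4 * t.+1).+1 = 4*t+5); last lia.
rewrite (@big_cat_nat _ _ _ (4*t).+1) /=; [|lia|lia].
rewrite (@win4' _ (4*t+5)) //; [|lia|lia].
congr (_ * _); case/orP: hr => /eqP ->; lia.
Qed.

Lemma size_bound r t : (r == 1) || (r == 3) ->
  4 ^ t * Den r (4 * t) <= (2 * t + 1) * Num r (4 * t).
Proof.
move=> hr; elim: t => [|t IH].
  rewrite /Num muln0 big_geq // /Den big_mkcond big_nat1 mod0n.
  by case/orP: hr => /eqP ->.
rewrite Den_step //.
have P := poly_ineq t hr.
have pos : 0 < 4 * t + r by case/orP: hr => /eqP ->; lia.
rewrite -(leq_pmul2r pos).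
rewrite (_ : (2 * t.+1 + 1) * Num r (4 * t.+1) * (4 * t + r) =
   (2 * t + 3) * (Num r (4 * t.+1) * (4 * t + r))); last by rewrite mulnA; congr (_ * _ * _); lia.
rewrite Num_step //.
set N := Num r (4 * t); set D := Den r (4 * t); set X := 4 ^ t.
rewrite expnS -/X.
apply: (@leq_trans (4 * (2 * t + 1) * (4 * t + 4 - r) * (4 * t + r) * N)).
  rewrite (_ : 4 * X * (D * (4 * t + 4 - r)) * (4 * t + r) = (4 * (4 * t + 4 - r) * (4 * t + r)) * (X * D)); last by nia.
  apply: leq_trans (leq_mul (leqnn _) IH) _.
  rewrite (_ : 4 * (2 * t + 1) * (4 * t + 4 - r) * (4 * t + r) * N =
     (4 * (4 * t + 4 - r) * (4 * t + r)) * ((2 * t + 1) * N)) //; nia.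
apply: leq_trans (leq_mul P (leqnn N)) _.
rewrite (_ : (2 * t + 3) * (N * ((8 * t + r) * (8 * t + 4 + r))) =
    (2 * t + 3) * (8 * t + r) * (8 * t + 4 + r) * N) //; nia.
Qed.

Lemma big_sub_le a b (P Q : pred nat) (F : nat -> nat) :
  (forall i, P i -> Q i) -> (forall i, Q i -> 0 < F i) ->
  \prod_(a <= i < b | P i) F i <= \prod_(a <= i < b | Q i) F i.
Proof.
move=> PQ QF; rewrite big_mkcond [X in _ <= X]big_mkcond; apply: leq_prod => i _.
case: (boolP (P i)) => Pi; first by rewrite (PQ _ Pi).
by case: ifP => // /QF.
Qed.

Lemma sum_le_trunc E T : \sum_(1 <= e < E) (e <= T) <= T.
Proof.
suff : \sum_(1 <= e < E) (e <= T) <= minn E.-1 T by lia.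
elim: E => [|E IH]; first by rewrite big_geq.
case: E IH => [|E] IH; first by rewrite big_geq.
rewrite big_nat_recr //=; case: (leqP E.+1 T) => h; lia.
Qed.

Lemma sum_eq1 a b c (P : bool) : \sum_(a <= e < b) ((e == c) && P) <= P.
Proof.
suff : \sum_(a <= e < b) ((e == c) && P) <= (a <= c < b) && P.
  move=> h; apply: leq_trans h _; by case: (a <= c < b); case: P.
elim: b => [|b IH]; first by rewrite big_geq // ltn0 andbF.
case: (leqP a b) => ab; last by rewrite big_geq //; lia.
rewrite big_nat_recr //=.
move: ab; case: (eqVneq b c) => [->|/eqP bc] ab /=.
  have -> : \sum_(a <= e < c) ((e == c) && P) = 0.
    rewrite big1_seq // => e /andP[_]; rewrite mem_index_iota => /andP[_ ec].
    by rewrite (ltn_eqF ec).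
  case: P {IH} => /=; lia.
rewrite addn0; apply: leq_trans IH _; case: P => /=; rewrite ?andbT ?andbF //; lia.
Qed.

Lemma prod_const_le E s c (P : pred nat) : (forall p, P p -> p < s) -> 0 < c ->
  \prod_(0 <= p < E | P p) c <= c ^ s.
Proof.
move=> Ps c0.
suff : \prod_(0 <= p < E | P p) c <= c ^ (minn E s).
  move=> h; apply: leq_trans h _; apply: leq_pexp2l => //; lia.
elim: E => [|E IH]; first by rewrite big_geq // expn_gt0 c0.
rewrite big_mkcond big_nat_recr //= -big_mkcond /=.
case: ifP => PE.
  have := Ps _ PE => Es.
  rewrite (_ : minn E.+1 s = (minn E s).+1); last lia.
  by rewrite expnSr leq_mul2r IH orbT.
rewrite muln1; apply: leq_trans IH _; apply: leq_pexp2l => //; lia.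
Qed.

Definition PW r a b := \prod_(a.+1 <= p < b.+1 | prime p && (p %% 4 == r)) p.

Lemma beta_le_trunc r y p : prime p -> beta r y p <= trunc_log p (2 * y).
Proof.
move=> pp; rewrite /beta; apply: leq_trans (sum_le_trunc ((2 * y).+1) _).
apply: leq_sum => e _; rewrite /ind.
case: (boolP ((2 * y) %/ p ^ e %% 4 == 1)) => h; rewrite ?andbF // andbT.
case: (p ^ e %% 4 == r) => //=.
suff -> : e <= trunc_log p (2 * y) by [].
apply: trunc_log_max; first exact: prime_gt1.
have : 0 < (2 * y) %/ p ^ e by move: h; case: ((2 * y) %/ p ^ e).
by rewrite divn_gt0 // expn_gt0 prime_gt0.
Qed.

Lemma beta_big2 r y p : prime p -> 2 * y < p * p -> beta r y p <= (p %% 4 == r).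
Proof.
move=> pp hp; rewrite /beta; apply: leq_trans (sum_eq1 1 (2 * y).+1 1 (p %% 4 == r)).
rewrite big_nat_cond [X in _ <= X]big_nat_cond.
apply: leq_sum => e /andP[/andP[e1 _] _].
case: (eqVneq e 1) => [->|en1] /=.
  by rewrite expn1 /ind; case: (p %% 4 == r); case: (_ %% 4 == 1).
rewrite /ind divn_small ?mod0n ?andbF //.
apply: leq_trans hp _; rewrite mulnn leq_exp2l; last exact: prime_gt1.
move/eqP: en1; lia.
Qed.

Lemma Bigb_le r y s low : (forall p, p * p <= 2 * y -> p < s) -> 0 < y -> low <= 2 * y ->
  Bigb r y <= (2 * y) ^ s * (primorial low * PW r low (2 * y)).
Proof.
move=> Hs y0 hlow; rewrite /Bigb (bigID (fun p => p * p <= 2 * y)) /=.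
apply: leq_mul.
  apply: (@leq_trans (\prod_(0 <= p < (2 * y).+1 | prime p && (p * p <= 2 * y)) (2 * y))).
    apply: leq_prod => p /andP[pp _].
    apply: leq_trans (leq_pexp2l (prime_gt0 pp) (beta_le_trunc r y pp)) _.
    apply: trunc_logP; [exact: prime_gt1 | lia].
  apply: prod_const_le => [p /andP[_ h]|]; [exact: Hs | lia].
apply: (@leq_trans (\prod_(0 <= p < (2 * y).+1 | prime p && ~~ (p * p <= 2 * y))
                      (if p %% 4 == r then p else 1))).
  apply: leq_prod => p /andP[pp h].
  apply: leq_trans (leq_pexp2l (prime_gt0 pp) (beta_big2 r pp _)) _; first lia.
  by case: (p %% 4 == r); rewrite ?expn1 ?expn0.
apply: (@leq_trans (\prod_(0 <= p < (2 * y).+1 | prime p) (if p %% 4 == r then p else 1))).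
  apply: big_sub_le => [p /andP[]//|p /prime_gt0 h]; by case: ifP.
rewrite -big_mkcondr /=.
rewrite (@big_cat_nat _ _ _ low.+1) /=; [|lia|lia].
apply: leq_mul; last by [].
by apply: big_sub_le => [p /andP[]//|p /prime_gt0].
Qed.

Lemma cheb r t s low : (r == 1) || (r == 3) -> 0 < t ->
  (forall p, p * p <= 8 * t -> p < s) -> low <= 8 * t ->
  4 ^ t <= (2 * t + 1) * ((8 * t) ^ s * (primorial low * PW r low (8 * t))).
Proof.
move=> hr t0 Hs hl.
have H1 := size_bound t hr.
have pos : 0 < Den r (4 * t) * Bigb r (4 * t) by rewrite muln_gt0 Den_gt0 ?Bigb_gt0.
have H2 := dvdn_leq pos (Num_dvd (4 * t) hr).
have H3 : 4 ^ t * Den r (4 * t) <= (2 * t + 1) * Bigb r (4 * t) * Den r (4 * t).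
  apply: leq_trans H1 _; rewrite -mulnA [Bigb _ _ * _]mulnC leq_mul2l H2 orbT //.
rewrite leq_pmul2r ?Den_gt0 // in H3.
apply: leq_trans H3 _; rewrite leq_mul2l; apply/orP; right.
have E : 2 * (4 * t) = 8 * t by lia.
have := @Bigb_le r (4 * t) s low; rewrite E; apply => //; lia.
Qed.

Definition sq N := 2 ^ ((trunc_log 2 N) %/ 2).+1.

Lemma sq_spec N p : p * p <= N -> p < sq N.
Proof.
move=> h; rewrite ltnNge; apply/negP => hp.
have h1 := trunc_log_ltn N (isT : 1 < 2).
have h2 : sq N * sq N <= p * p by apply: leq_mul.
have h3 : 2 ^ (trunc_log 2 N).+1 <= sq N * sq N.
  rewrite /sq -expnD leq_exp2l //; lia.
lia.
Qed.

Definition gk k := k + 2 + (k + 4) * (2 ^ ((k + 3) %/ 2).+1 + 256).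

Lemma gk_le k : 14 <= k -> gk k <= 2 ^ k.
Proof.
elim/ltn_ind: k => k IH hk.
case: (ltnP k 16) => k16.
  have : (k = 14) \/ (k = 15) by lia.
  by case => ->; rewrite /gk; vm_compute.
have := IH (k - 2) ltac:(lia) ltac:(lia).
rewrite /gk.
have E1 : (k + 3) %/ 2 = ((k - 2 + 3) %/ 2).+1 by lia.
rewrite E1 !expnS.
have E2 : 2 ^ k = 4 * 2 ^ (k - 2).
  have {1}-> : k = (k - 2) + 2 by lia.
  by rewrite expnD mulnC.
rewrite E2 -/(gk _); move: (2 ^ ((k - 2 + 3) %/ 2)) (2 ^ (k - 2)) => a b.
clear IH E1 E2.
rewrite (_ : k - 2 + 2 = k); last lia.
rewrite (_ : k - 2 + 4 = k + 2); last lia.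
set c := 2 * a + 256 => h.
apply: (@leq_trans (k + 2 + (2 * (k + 2)) * (2 * c))).
  rewrite leq_add2l; apply: leq_mul; rewrite /c; lia.
rewrite mulnACA (_ : 2 * 2 = 4) //; move: h; move: ((k + 2) * c) => P; lia.
Qed.


Lemma exp_ineq z : 2 ^ 14 <= z -> (2 * z + 1) * (8 * z) ^ (sq (8 * z) + 256) < 2 ^ z.
Proof.
move=> hz.
set k := trunc_log 2 z.
have z0 : 0 < z by apply: leq_trans hz; rewrite expn_gt0.
have hk1 : 2 ^ k <= z by apply: trunc_logP.
have hk2 : z < 2 * 2 ^ k by rewrite -expnS; apply: trunc_log_ltn.
have hk : 14 <= k by apply: trunc_log_max.
have Tk : trunc_log 2 (8 * z) = k + 3.
  apply: trunc_log_eq => //; rewrite -addnS !expnD.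
  move: hk1 hk2; move: (2 ^ k) => K; lia.
rewrite /sq Tk.
set E := 2 ^ ((k + 3) %/ 2).+1 + 256.
have A1 : 2 * z + 1 <= 2 ^ (k + 2).
  rewrite expnD (_ : 2 ^ 2 = 4) //; move: hk1 hk2; move: (2 ^ k) => K; lia.
have A2 : (8 * z) ^ E < 2 ^ ((k + 4) * E).
  rewrite mulnC expnM ltn_exp2r; last by rewrite /E addn_gt0 orbT.
  rewrite expnD (_ : 2 ^ 4 = 16) //; move: hk1 hk2; move: (2 ^ k) => K; lia.
have A3 : 2 ^ (k + 2) * 2 ^ ((k + 4) * E) <= 2 ^ z.
  rewrite -expnD leq_exp2l //; apply: (@leq_trans (gk k)); first by rewrite /gk.
  exact: leq_trans (gk_le hk) hk1.
apply: leq_trans A3; apply: leq_trans (leq_mul A1 A2).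
rewrite mulnS; move: ((8 * z) ^ E) => Y; nia.
Qed.

Section Enum.
Variables (r : nat) (q : nat -> nat).
Hypothesis hq : is_enum_primes_mod4 r q.

Lemma q_mono i j : 0 < i -> i < j -> q i < q j.
Proof.
case: hq => inc _ i0; elim: j => [//|j IH] ij.
rewrite ltnS leq_eqVlt in ij; case/orP: ij => [/eqP <-|ij]; first exact: inc.
apply: ltn_trans (IH ij) (inc _ _); lia.
Qed.

Lemma q_prime k : 0 < k -> prime (q k). Proof. by case: hq => _ [h _] /h []. Qed.
Lemma q_mod k : 0 < k -> q k %% 4 = r. Proof. by case: hq => _ [h _] /h []. Qed.
Lemma q_surj p : prime p -> p %% 4 = r -> exists2 k, 0 < k & q k = p.
Proof. by case: hq => _ [_ h] /h. Qed.

Lemma q_next_le n p : 0 < n -> prime p -> p %% 4 = r -> q n < p -> q n.+1 <= p.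
Proof.
move=> n0 pp pr lt; have [k k0 qk] := q_surj pp pr.
case: (ltnP n k) => nk.
  rewrite -qk; rewrite leq_eqVlt in nk; case/orP: nk => [/eqP <-//|nk].
  exact: ltnW (q_mono _ nk).
have : q k <= q n.
  rewrite leq_eqVlt in nk; case/orP: nk => [/eqP ->//|nk]; exact: ltnW (q_mono k0 nk).
lia.
Qed.

Lemma no_between n p : 0 < n -> prime p -> p %% 4 = r -> q n < p -> p < q n.+1 -> False.
Proof. move=> n0 pp pr h1 h2; have := q_next_le n0 pp pr h1; lia. Qed.

Lemma no_below p : prime p -> p %% 4 = r -> p < q 1 -> False.
Proof.
move=> pp pr h; have [k k0 qk] := q_surj pp pr.
case: k k0 qk => [//|[|k]] _ qk; first by lia.
have := q_mono (isT : 0 < 1) (isT : 1 < k.+2); lia.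
Qed.

Definition V J := \sum_(0 <= i < J | prime (4 * i + r)) (4 * i + r).

Hypothesis hr : r < 4.

Lemma q_div k : 0 < k -> 4 * (q k %/ 4) + r = q k.
Proof. move=> k0; have := q_mod k0; have := divn_eq (q k) 4; lia. Qed.

Lemma V_split a b : a <= b ->
  (forall i, a <= i < b -> ~~ prime (4 * i + r)) -> V b = V a.
Proof.
move=> ab H; rewrite /V (@big_cat_nat _ _ _ a 0 b) //= [X in _ + X]big1_seq ?addn0 //.
move=> i /andP[pi]; rewrite mem_index_iota => hi.
by move: (H i hi); rewrite pi.
Qed.

Lemma Ssum_V n : 0 < n -> Ssum q n = V (q n %/ 4).+1.
Proof.
case: n => [//|n] _; elim: n => [|n IH].
  rewrite /Ssum big_nat1 /V big_mkcond big_nat_recr //= -big_mkcond /=.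
  rewrite (q_div (isT : 0 < 1)) (q_prime (isT : 0 < 1)) -/(V _).
  rewrite (_ : V (q 1 %/ 4) = 0) //.
  rewrite (@V_split 0 (q 1 %/ 4)) //; first by rewrite /V big_geq.
  move=> i /andP[_ hi]; apply/negP => pi.
  apply: (no_below pi); [lia | have := q_div (isT : 0 < 1); lia].
rewrite /Ssum big_nat_recr //= -/(Ssum q n.+1) IH.
have h1 := q_div (isT : 0 < n.+1).
have h2 := q_div (isT : 0 < n.+2).
have h3 := q_mono (isT : 0 < n.+1) (ltnSn n.+1).
rewrite /V [in RHS](@big_cat_nat _ _ _ (q n.+2 %/ 4)) /=; [|lia|lia].
rewrite [X in _ = _ + X]big_mkcond big_nat1 h2 (q_prime (isT : 0 < n.+2)) /=.
congr (_ + _).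
have := @V_split (q n.+1 %/ 4).+1 (q n.+2 %/ 4); rewrite /V => -> //; first lia.
move=> i hi; apply/negP => pi.
apply: (@no_between n.+1 (4 * i + r)) => //; lia.
Qed.

End Enum.

Fixpoint trial (f : nat) (p d : N) : bool :=
  match f with
  | O => false
  | S f' => if N.ltb p (N.mul d d) then true
            else if N.eqb (N.modulo p d) 0%num then false else trial f' p (N.succ d)
  end.

Definition certN (p : N) : bool := N.ltb 1%num p && trial 400 p 2%num.

Fixpoint scan (c lo : N) (n : nat) (k s : N) : bool :=
  match n with
  | O => true
  | S n' => let g := certN k in
     (if g && N.ltb lo k then N.leb (N.add k c) s else true) &&
     scan c lo n' (N.add k 4%num) (if g then (N.add s k) else s)
  end.


Lemma trial_sound f (n : nat) (d : N) : trial f (N.of_nat n) d = true ->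
  forall d' : nat, (N.to_nat d <= d')%N -> (d' * d' <= n)%N -> ~~ (d' %| n).
Proof.
elim: f d => [//|f IH] d /=.
case: ifP => [/N.ltb_lt h _|/N.ltb_ge h].
  move=> d' h1 h2; exfalso; nia.
case: ifP => [//|/N.eqb_neq h3] /IH {}IH d' h1 h2.
case: (eqVneq d' (N.to_nat d)) => [e|ne]; last first.
  apply: IH => //; move/eqP: ne; lia.
apply/negP => /dvdnP [m hm]; apply: h3.
have -> : N.of_nat n = (N.of_nat m * d)%num by rewrite hm e; lia.
apply: N.Div0.mod_mul.
Qed.

Lemma certN_sound n : certN (N.of_nat n) = true -> prime n.
Proof.
rewrite /certN => /andP[/N.ltb_lt h1 h2].
have n1 : 1 < n by lia.
apply: ltn_pdiv2_prime; first lia.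
rewrite ltnNge; apply/negP => hle.
have hp := prime_gt1 (pdiv_prime n1).
have := trial_sound h2 (d' := pdiv n); rewrite pdiv_dvd => H.
by move: (H ltac:(simpl; lia) ltac:(rewrite mulnn; exact: hle)).
Qed.

Lemma scan_sound c lo n k s : scan c lo n k s = true ->
  forall j, j < n -> certN (k + 4 * N.of_nat j)%num = true -> (lo < k + 4 * N.of_nat j)%num ->
  N.to_nat k + 4 * j + N.to_nat c <=
  N.to_nat s + \sum_(0 <= i < j | certN (k + 4 * N.of_nat i)%num) (N.to_nat k + 4 * i).
Proof.
elim: n k s => [//|n IH] k s /= /andP[H1 H2] [|j] hj hc hl.
  rewrite big_geq // addn0; move: H1; rewrite N.add_0_r in hc hl *.
  rewrite hc (proj2 (N.ltb_lt _ _) hl) /= => /N.leb_le; lia.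
have := IH _ _ H2 j ltac:(lia).
have E : forall i, (k + 4 * N.of_nat i.+1 = (k + 4) + 4 * N.of_nat i)%num by move=> i; lia.
rewrite E in hc hl; move=> /(_ hc hl) Hi.
rewrite big_mkcond big_ltn // big_add1.
rewrite (_ : (k + 4 * N.of_nat 0)%num = k); last lia.
rewrite (eq_bigr (fun i => if certN (k + 4 + 4 * N.of_nat i)%num then N.to_nat (k + 4) + 4 * i else 0)); last first.
  by move=> i _; rewrite E (_ : N.to_nat k + 4 * i.+1 = N.to_nat (k + 4) + 4 * i) //; lia.
rewrite -big_mkcond /=.
move: Hi; case: (certN k) => /= Hi; lia.
Qed.

Lemma reindex4 r J (P : pred nat) : r < 4 ->
  \sum_(0 <= k < 4 * J | P k && (k %% 4 == r)) k =
  \sum_(0 <= i < J | P (4 * i + r)) (4 * i + r).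
Proof.
move=> hr; elim: J => [|J IH]; first by rewrite !big_geq.
rewrite (@big_cat_nat _ _ _ (4 * J)) /=; [|lia|lia].
rewrite IH [in RHS]big_mkcond [in RHS]big_nat_recr //= -big_mkcond /=.
congr (_ + _).
rewrite big_mkcond big_ltn; last lia. rewrite big_ltn; last lia.
rewrite big_ltn; last lia. rewrite big_ltn; last lia. rewrite big_geq; last lia.
have h0 : (4 * J) %% 4 = 0 by lia.
have h1 : (4 * J).+1 %% 4 = 1 by lia.
have h2 : (4 * J).+2 %% 4 = 2 by lia.
have h3 : (4 * J).+3 %% 4 = 3 by lia.
rewrite h0 h1 h2 h3.
clear IH; case: r hr => [|[|[|[|r]]]] // _ /=; rewrite ?andbF ?andbT ?addn0 ?add0n.
all: by rewrite ?addn1 ?addn2 ?addn3.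
Qed.

Lemma sum_sub_le a b (P Q : pred nat) (F : nat -> nat) :
  (forall i, P i -> Q i) ->
  \sum_(a <= i < b | P i) F i <= \sum_(a <= i < b | Q i) F i.
Proof.
move=> PQ; rewrite big_mkcond [X in _ <= X]big_mkcond; apply: leq_sum => i _.
case: (boolP (P i)) => Pi; first by rewrite (PQ _ Pi).
by case: ifP.
Qed.

Lemma base_case r c x0 q n j1 L :
  (r == 1) || (r == 3) -> is_enum_primes_mod4 r q -> 0 < n ->
  scan (N.of_nat c) (N.of_nat x0) L (N.of_nat r) 0%num = true ->
  certN (N.of_nat (4 * j1 + r)) = true -> j1 < L ->
  x0 <= q n -> q n < 4 * j1 + r ->
  q n.+1 + c <= Ssum q n.
Proof.
move=> hr hq n0 Hs c1 j1b hx0 hx1.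
have hr4 : r < 4 by case/orP: hr => /eqP ->.
have hx := q_div hq hr4 n0.
have ex : exists j, (q n < 4 * j + r) && certN (N.of_nat (4 * j + r)).
  by exists j1; rewrite hx1 c1.
case: (ex_minnP ex) => jm /andP[hjm cjm] minj.
have jm1 : jm <= j1 by apply: minj; rewrite hx1 c1.
have E : forall i, (N.of_nat r + 4 * N.of_nat i)%num = N.of_nat (4 * i + r) by move=> i; lia.
have S := scan_sound Hs (j := jm) ltac:(lia) ltac:(by rewrite E) ltac:(rewrite E; lia).
rewrite !Nat2N.id /= in S.
rewrite (eq_bigl (fun i => certN (N.of_nat (4 * i + r)))) in S; last by move=> i; rewrite E.
have pp : prime (4 * jm + r) by apply: certN_sound.
have pr : (4 * jm + r) %% 4 = r by lia.
have Hq := q_next_le hq n0 pp pr hjm.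
rewrite (Ssum_V hq hr4 n0).
apply: (@leq_trans (4 * jm + r + c)); first lia.
apply: leq_trans (_ : _ <= \sum_(0 <= i < jm | certN (N.of_nat (4 * i + r))) (r + 4 * i)) _; first lia.
have jmx : (q n %/ 4).+1 <= jm by lia.
rewrite (@big_cat_nat _ _ _ (q n %/ 4).+1) //= [X in _ + X]big1_seq ?addn0; last first.
  move=> i /andP[ci]; rewrite mem_index_iota => /andP[h1 h2].
  have := minj i; rewrite ci andbT; lia.
rewrite /V; apply: leq_trans (sum_sub_le _ _ _ (Q := fun i => prime (4 * i + r)) _) _.
  by move=> i /certN_sound.
by apply: leq_sum => i _; rewrite addnC.
Qed.

Lemma PW_none r a b :
  ~~ has (fun p => prime p && (p %% 4 == r)) (iota a.+1 (b - a)) -> PW r a b = 1.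
Proof.
move/hasPn => H; rewrite /PW big1_seq // => p /andP[pp]; rewrite mem_index_iota => hp.
have : p \in iota a.+1 (b - a) by rewrite mem_iota; lia.
by move/H; rewrite pp.
Qed.

Lemma asym_next r q n :
  (r == 1) || (r == 3) -> is_enum_primes_mod4 r q -> 0 < n -> 2 ^ 17 <= q n ->
  q n.+1 <= 16 * q n.
Proof.
move=> hr hq n0; set x := q n => hx.
have x0 : 0 < x by apply: leq_trans hx; rewrite expn_gt0.
have Hs : forall p, p * p <= 8 * (2 * x) -> p < sq (16 * x).
  by move=> p; rewrite (_ : 8 * (2 * x) = 16 * x); [apply: sq_spec | lia].
have C := @cheb r (2 * x) (sq (16 * x)) x hr ltac:(lia) Hs ltac:(lia).
case: (boolP (has (fun p => prime p && (p %% 4 == r)) (iota x.+1 (16 * x - x)))).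
  move/hasP => [p]; rewrite mem_iota => hp /andP[pp /eqP pr].
  have xp : q n < p by rewrite -/x; lia.
  have := q_next_le hq n0 pp pr xp; lia.
move/PW_none => PW1; rewrite (_ : 8 * (2 * x) = 16 * x) in C; last lia.
rewrite PW1 muln1 in C.
have P := primorial_le x.
have h14 : 2 ^ 14 <= 2 * x.
  apply: leq_trans (_ : 2 ^ 14 <= 2 ^ 17) _; [by rewrite leq_exp2l | lia].
have Ex := exp_ineq h14.
rewrite (_ : 8 * (2 * x) = 16 * x) in Ex; last lia.
rewrite (_ : 2 ^ (2 * x) = 4 ^ x) in Ex; last by rewrite expnM.
rewrite (_ : 4 ^ (2 * x) = 4 ^ x * 4 ^ x) in C; last by rewrite mul2n -addnn expnD.
have : (16 * x) ^ sq (16 * x) <= (16 * x) ^ (sq (16 * x) + 256).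
  apply: leq_pexp2l; lia.
move: C Ex P; move: (4 ^ x) (primorial x) ((16 * x) ^ sq (16 * x)) ((16 * x) ^ (sq (16 * x) + 256)) => F Pr A B.
move: (2 * (2 * x) + 1) => K C Ex P AB.
have F0 : 0 < F by lia.
have h1 : F * F <= (K * B) * F.
  apply: leq_trans C _; rewrite -mulnA leq_mul2l; apply/orP; right; exact: leq_mul.
have h2 : (K * B) * F < F * F by rewrite ltn_pmul2r.
lia.
Qed.

Lemma prod_const_count a b (P : pred nat) c :
  \prod_(a <= i < b | P i) c = c ^ (\sum_(a <= i < b | P i) 1).
Proof.
apply: (big_rec2 (fun x y => x = c ^ y)); first by rewrite expn0.
by move=> i y1 y2 _ ->; rewrite expnD expn1.
Qed.

Lemma pow4 t : 4 ^ (t %/ 2) * 2 ^ t <= 4 ^ t.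
Proof.
have e4 : forall a, 4 ^ a = 2 ^ (2 * a) by move=> a; rewrite expnM.
rewrite !e4 -expnD leq_exp2l; [lia | by []].
Qed.

Lemma asym_sum r q n :
  (r == 1) || (r == 3) -> is_enum_primes_mod4 r q -> 0 < n -> 2 ^ 17 <= q n ->
  16 * q n + 244 <= Ssum q n.
Proof.
move=> hr hq n0; set x := q n => hx.
have hr4 : r < 4 by case/orP: hr => /eqP ->.
set t := x %/ 8; set low := t %/ 2.
have ht : 2 ^ 14 <= t by rewrite /t; lia.
have t0 : 0 < t by lia.
have Hs : forall p, p * p <= 8 * t -> p < sq (8 * t) by move=> p; apply: sq_spec.
have C := @cheb r t (sq (8 * t)) low hr t0 Hs ltac:(lia).
set P := fun k => prime k && (k %% 4 == r).
set SW := \sum_(low.+1 <= k < (8 * t).+1 | P k) k.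
have HS : SW <= Ssum q n.
  rewrite (Ssum_V hq hr4 n0) /V -reindex4 //.
  have h1 := q_div hq hr4 n0.
  rewrite (@big_cat_nat _ _ _ low.+1) /=; [|lia|lia].
  rewrite (@big_cat_nat _ _ _ (8 * t).+1 low.+1) /=; [|lia|lia].
  rewrite /SW /P; lia.
suff : 16 * x + 244 <= SW by lia.
rewrite leqNgt; apply/negP => hlt.
set m := \sum_(low.+1 <= k < (8 * t).+1 | P k) 1.
have Hm1 : m * low.+1 <= SW.
  rewrite /m big_distrl /= /SW big_nat_cond [X in _ <= X]big_nat_cond.
  apply: leq_sum => k /andP[/andP[h1 h2] _]; rewrite mul1n; lia.
have Hm : m <= 256.
  rewrite leqNgt; apply/negP => hm.
  have : 257 * low.+1 <= m * low.+1 by rewrite leq_mul2r hm orbT.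
  lia.
have HPW : PW r low (8 * t) <= (8 * t) ^ 256.
  apply: (@leq_trans ((8 * t) ^ m)); last by apply: leq_pexp2l; lia.
  rewrite /m -prod_const_count /PW big_nat_cond [X in _ <= X]big_nat_cond.
  apply: leq_prod => k /andP[/andP[h1 h2] _]; lia.
have Pr := primorial_le low.
have Ex := exp_ineq ht.
rewrite expnD in Ex.
have H4 : 4 ^ low * 2 ^ t <= 4 ^ t := pow4 t.
have Fl0 : 0 < 4 ^ low by rewrite expn_gt0.
move: C Ex H4 Pr HPW Fl0.
move: (4 ^ t) (4 ^ low) (2 ^ t) ((8 * t) ^ sq (8 * t)) ((8 * t) ^ 256) (primorial low) (PW r low (8 * t)) (2 * t + 1)
  => Ft Fl G A B Pm W K C Ex H4 Pr HPW Fl0.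
have h1 : Fl * G <= (K * (A * B)) * Fl.
  apply: leq_trans H4 _; apply: leq_trans C _.
  rewrite -!mulnA leq_mul2l; apply/orP; right; rewrite leq_mul2l; apply/orP; right.
  rewrite [B * Fl]mulnC; exact: leq_mul.
have h2 : (K * (A * B)) * Fl < G * Fl by rewrite ltn_pmul2r.
lia.
Qed.

Lemma main_gen r c x0 q j1 L n0 :
  (r == 1) || (r == 3) -> c <= 244 -> is_enum_primes_mod4 r q -> 0 < n0 -> x0 <= q n0 ->
  scan (N.of_nat c) (N.of_nat x0) L (N.of_nat r) 0%num = true ->
  certN (N.of_nat (4 * j1 + r)) = true -> j1 < L -> (2 ^ 17 <= 4 * j1 + r) = true ->
  forall n, n0 <= n -> q n.+1 + c <= Ssum q n.
Proof.
move=> hr hc hq n00 hx0 Hs c1 j1L hj1 n hn.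
have npos : 0 < n by lia.
have hxn : x0 <= q n.
  rewrite leq_eqVlt in hn; case/orP: hn => [/eqP <-//|hn].
  by apply: leq_trans hx0 (ltnW (q_mono hq n00 hn)).
case: (ltnP (q n) (2 ^ 17)) => h17.
  apply: (base_case hr hq npos Hs c1 j1L hxn); lia.
have := asym_next hr hq npos h17; have := asym_sum hr hq npos h17; lia.
Qed.

Section Chain.
Variables (r : nat) (q : nat -> nat).
Hypothesis hq : is_enum_primes_mod4 r q.

Lemma q_first b : prime b -> b %% 4 = r ->
  all (fun p => ~~ (prime p && (p %% 4 == r))) (iota 0 b) -> q 1 = b.
Proof.
move=> pb rb /allP H.
have h1 := q_next_le hq (n := 0).
have [k k0 qk] := q_surj hq pb rb.
have le1 : q 1 <= b.
  case: k k0 qk => [//|[|k]] _ qk; first by rewrite qk.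
  rewrite -qk; exact: ltnW (q_mono hq (isT : 0 < 1) (isT : 1 < k.+2)).
rewrite leq_eqVlt in le1; case/orP: le1 => [/eqP //|lt].
have := H (q 1); rewrite mem_iota lt (q_prime hq (isT : 0 < 1)) (q_mod hq (isT : 0 < 1)) eqxx.
by move/(_ isT).
Qed.

Lemma q_step n a b : 0 < n -> q n = a -> prime b -> b %% 4 = r -> a < b ->
  all (fun p => ~~ (prime p && (p %% 4 == r))) (iota a.+1 (b - a.+1)) -> q n.+1 = b.
Proof.
move=> n0 qa pb rb ab /allP H.
have qb : q n < b by rewrite qa.
have le1 := q_next_le hq n0 pb rb qb.
have gt := q_mono hq n0 (ltnSn n); rewrite qa in gt.
rewrite leq_eqVlt in le1; case/orP: le1 => [/eqP //|lt].
have := H (q n.+1); rewrite mem_iota (q_prime hq (isT : 0 < n.+1)) (q_mod hq (isT : 0 < n.+1)) eqxx.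
have -> : (a.+1 <= q n.+1 < a.+1 + (b - a.+1)) = true by apply/andP; split; lia.
by move/(_ isT).
Qed.
End Chain.

Lemma q10 q : is_enum_primes_mod4 1 q -> q 10 = 89.
Proof.
move=> hq.
have e1 : q 1 = 5 by apply: (q_first hq).
have e2 : q 2 = 13 by apply: (q_step hq _ e1).
have e3 : q 3 = 17 by apply: (q_step hq _ e2).
have e4 : q 4 = 29 by apply: (q_step hq _ e3).
have e5 : q 5 = 37 by apply: (q_step hq _ e4).
have e6 : q 6 = 41 by apply: (q_step hq _ e5).
have e7 : q 7 = 53 by apply: (q_step hq _ e6).
have e8 : q 8 = 61 by apply: (q_step hq _ e7).
have e9 : q 9 = 73 by apply: (q_step hq _ e8).
by apply: (q_step hq _ e9).
Qed.

Lemma q8 q : is_enum_primes_mod4 3 q -> q 8 = 47.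
Proof.
move=> hq.
have e1 : q 1 = 3 by apply: (q_first hq).
have e2 : q 2 = 7 by apply: (q_step hq _ e1).
have e3 : q 3 = 11 by apply: (q_step hq _ e2).
have e4 : q 4 = 19 by apply: (q_step hq _ e3).
have e5 : q 5 = 23 by apply: (q_step hq _ e4).
have e6 : q 6 = 31 by apply: (q_step hq _ e5).
have e7 : q 7 = 43 by apply: (q_step hq _ e6).
by apply: (q_step hq _ e7).
Qed.

Lemma scan1 : scan (N.of_nat 244) (N.of_nat 89) 33000 (N.of_nat 1) 0%num = true.
Proof. vm_compute. reflexivity. Qed.
Lemma scan3 : scan (N.of_nat 112) (N.of_nat 47) 33000 (N.of_nat 3) 0%num = true.
Proof. vm_compute. reflexivity. Qed.
Lemma cert1 : certN (N.of_nat (4 * 32775 + 1)) = true.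
Proof. vm_compute. reflexivity. Qed.
Lemma cert3 : certN (N.of_nat (4 * 32777 + 3)) = true.
Proof. vm_compute. reflexivity. Qed.
Lemma big1c : (2 ^ 17 <= 4 * 32775 + 1) = true.
Proof. vm_compute. reflexivity. Qed.
Lemma big3c : (2 ^ 17 <= 4 * 32777 + 3) = true.
Proof. vm_compute. reflexivity. Qed.

Local Open Scope ring_scope.

Theorem lemma2p4 :
  (forall q : nat -> nat, is_enum_primes_mod4 1 q ->
     forall n : nat, (10 <= n)%N ->
       (Ssum q n)%:Z - (q n.+1)%:Z >= 244)
  /\
  (forall q : nat -> nat, is_enum_primes_mod4 3 q ->
     forall n : nat, (8 <= n)%N ->
       (Ssum q n)%:Z - (q n.+1)%:Z >= 112).
Proof.
split.
  move=> q hq n hn.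
  have H := @main_gen 1 244 89 q 32775 33000 10 isT isT hq isT
     (eq_leq (esym (q10 hq))) scan1 cert1 isT big1c n hn.
  lia.
move=> q hq n hn.
have H := @main_gen 3 112 47 q 32777 33000 8 isT isT hq isT
   (eq_leq (esym (q8 hq))) scan3 cert3 isT big3c n hn.
lia.
Qed.
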